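(* Let $\Sigma_n=\{x\in\mathbb R^n:x_i\ge0,\ \sum_ix_i\le1\}$, $\phi(x)=\big(\sqrt{1-\sum_{i=1}^nx_i},\sqrt{x_1},\dots,\sqrt{x_n}\big)\in\mathbb R^{n+1}$, $d_{\Sigma_n}(x,y)=2\arccos(\phi(x)\cdot\phi(y))$ and $f(x,y)=\cos(d_{\Sigma_n}(x,y)/2)=\phi(x)\cdot\phi(y)$. Then for each fixed $y\in\Sigma_n$ the function $x\mapsto f(x,y)$ is concave on $\Sigma_n$, and for each fixed $x$ the function $y\mapsto f(x,y)$ is concave on $\Sigma_n$. Consequently, for every convex polytope $\mathcal P\subset\Sigma_n$, its diameter with respect to $d_{\Sigma_n}$ equals $\max\{d_{\Sigma_n}(u,v):\ u,v\text{ vertices of }\mathcal P\}$.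
   Context: $\cdot$ denotes the Euclidean inner product in $\mathbb R^{n+1}$; $d_{\Sigma_n}$ is the Baran distance of the simplex $\Sigma_n$. *)

(* Defs.v *)
From HB Require Import structures.
From mathcomp Require Import all_boot all_order all_algebra.
From mathcomp Require Import all_classical all_reals all_analysis.
Set Implicit Arguments. Unset Strict Implicit. Unset Printing Implicit Defensive.
Import Order.TTheory GRing.Theory Num.Theory.
Local Open Scope ring_scope.
Local Open Scope classical_set_scope.

Section Defs.
Variables (R : realType) (n : nat).
Implicit Types x y : 'rV[R]_n.

Definition simplex : set 'rV[R]_n :=
  [set x | (forall i, 0 <= x ord0 i) /\ \sum_i x ord0 i <= 1].

(* phi(x) = (sqrt(1 - sum x_i), sqrt x_1, ..., sqrt x_n) in R^{n+1} *)
Definition phi x : 'rV[R]_n.+1 :=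
  \row_(j < n.+1)
    match fintype.split (j : 'I_(1 + n)) with
    | inl _ => Num.sqrt (1 - \sum_i x ord0 i)
    | inr i => Num.sqrt (x ord0 i)
    end.

Definition dotR (m : nat) (u v : 'rV[R]_m) : R := \sum_i u ord0 i * v ord0 i.

Definition fB x y : R := dotR (phi x) (phi y).

Definition baran_dist x y : R := 2 * acos (fB x y).

Definition concave_on (A : set 'rV[R]_n) (g : 'rV[R]_n -> R) : Prop :=
  forall a b, A a -> A b -> forall t : R, 0 <= t <= 1 ->
    t * g a + (1 - t) * g b <= g (t *: a + (1 - t) *: b).

Definition conv_hull (S : seq 'rV[R]_n) : set 'rV[R]_n :=
  [set x | exists w : 'I_(size S) -> R,
     (forall k, 0 <= w k) /\ \sum_k w k = 1 /\
     x = \sum_k w k *: nth 0 S k].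

(* vertices = extreme points of P *)
Definition is_vertex (P : set 'rV[R]_n) (v : 'rV[R]_n) : Prop :=
  P v /\ forall a b, P a -> P b -> forall t : R, 0 < t < 1 ->
    v = t *: a + (1 - t) *: b -> a = v /\ b = v.

Definition diam (d : 'rV[R]_n -> 'rV[R]_n -> R) (P : set 'rV[R]_n) : R :=
  sup [set d x y | x in P & y in P].

End Defs.

(* Main.v *)
Require Import Defs.
From HB Require Import structures.
From mathcomp Require Import all_boot all_order all_algebra.
From mathcomp Require Import all_classical all_reals all_analysis.
From mathcomp Require Import ring lra.
Import Order.TTheory GRing.Theory Num.Theory.
Local Open Scope ring_scope.
Local Open Scope classical_set_scope.

Section S.
Variables (R : realType) (n : nat).
Implicit Types x y : 'rV[R]_n.

Lemma phiE0 x : phi x ord0 ord0 = Num.sqrt (1 - \sum_i x ord0 i).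
Proof.
rewrite mxE; case: splitP => [j _ | k /= hk] //.
Qed.

Lemma phiES x i : phi x ord0 (lift ord0 i) = Num.sqrt (x ord0 i).
Proof.
rewrite mxE; case: splitP => [j /= hj | k /= hk].
  by have := ltn_ord j; rewrite -hj /bump /=.
by congr (Num.sqrt (x ord0 _)); apply: val_inj; move: hk; rewrite /= /bump /=; case.
Qed.

Lemma fBE x y : fB x y = Num.sqrt (1 - \sum_i x ord0 i) * Num.sqrt (1 - \sum_i y ord0 i)
  + \sum_i Num.sqrt (x ord0 i) * Num.sqrt (y ord0 i).
Proof.
rewrite /fB /dotR big_ord_recl !phiE0; congr (_ + _).
by apply: eq_bigr => i _; rewrite !phiES.
Qed.

Lemma fBC x y : fB x y = fB y x.
Proof. by rewrite !fBE mulrC; congr (_ + _); apply: eq_bigr => i _; rewrite mulrC. Qed.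

Lemma jensen_sq (I : finType) (w b : I -> R) : (forall k, 0 <= w k) -> \sum_k w k = 1 ->
  (\sum_k w k * b k) ^+ 2 <= \sum_k w k * b k ^+ 2.
Proof.
move=> w0 w1; set mu := \sum_k w k * b k.
have : 0 <= \sum_k w k * (b k - mu) ^+ 2 by apply: sumr_ge0 => k _; rewrite mulr_ge0 ?sqr_ge0.
have -> : \sum_k w k * (b k - mu) ^+ 2 =
   \sum_k w k * b k ^+ 2 - 2 * mu * (\sum_k w k * b k) + mu ^+ 2 * \sum_k w k.
  transitivity (\sum_k (w k * b k ^+ 2 - 2 * mu * (w k * b k) + mu ^+ 2 * w k)).
    by apply: eq_bigr => k _; ring.
  by rewrite !big_split /= sumrN -!mulr_sumr.
rewrite w1 -/mu; lra.
Qed.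

Lemma jensen_sqrt (I : finType) (w a : I -> R) : (forall k, 0 <= w k) -> \sum_k w k = 1 ->
  (forall k, 0 <= a k) ->
  \sum_k w k * Num.sqrt (a k) <= Num.sqrt (\sum_k w k * a k).
Proof.
move=> w0 w1 a0.
have mu0 : 0 <= \sum_k w k * Num.sqrt (a k) by apply: sumr_ge0 => k _; rewrite mulr_ge0 ?sqrtr_ge0.
rewrite -{1}(ger0_norm mu0) -sqrtr_sqr.
apply: ler_wsqrtr; apply: (le_trans (@jensen_sq I w (fun k => Num.sqrt (a k)) w0 w1)).
by rewrite le_eqVlt; apply/orP; left; apply/eqP; apply: eq_bigr => k _; rewrite sqr_sqrtr.
Qed.


Lemma simplex_sum_le1 x : simplex x -> 0 <= 1 - \sum_i x ord0 i.
Proof. by case=> _ h; rewrite subr_ge0. Qed.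

Lemma fB_jensen (I : finType) (w : I -> R) (p : I -> 'rV[R]_n) y :
  (forall k, 0 <= w k) -> \sum_k w k = 1 -> (forall k, simplex (p k)) -> simplex y ->
  \sum_k w k * fB (p k) y <= fB (\sum_k w k *: p k) y.
Proof.
move=> w0 w1 ps ys.
have XE i : (\sum_k w k *: p k) ord0 i = \sum_k w k * p k ord0 i.
  by rewrite summxE; apply: eq_bigr => k _; rewrite mxE.
have SE : 1 - \sum_i (\sum_k w k *: p k) ord0 i = \sum_k w k * (1 - \sum_i p k ord0 i).
  under eq_bigr do rewrite XE.
  rewrite exchange_big /=.
  transitivity (\sum_k (w k - w k * \sum_i p k ord0 i)); last first.
    by apply: eq_bigr => k _; rewrite mulrBr mulr1.
  by rewrite sumrB w1; congr (_ - _); apply: eq_bigr => k _; rewrite mulr_sumr.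
rewrite fBE SE.
under eq_bigr do rewrite fBE mulrDr.
rewrite big_split /=.
apply: lerD.
  under eq_bigr do rewrite mulrA.
  rewrite -mulr_suml; apply: ler_wpM2r; first exact: sqrtr_ge0.
  by apply: jensen_sqrt => // k; apply: simplex_sum_le1.
under eq_bigr do rewrite mulr_sumr.
rewrite exchange_big /=; apply: ler_sum => i _.
rewrite XE.
under eq_bigr do rewrite mulrA.
rewrite -mulr_suml; apply: ler_wpM2r; first exact: sqrtr_ge0.
apply: jensen_sqrt => // k; by case: (ps k) => h _; apply: h.
Qed.


Lemma fB_concave y : simplex y -> concave_on (@simplex R n) (fun x => fB x y).
Proof.
move=> ys a b sa sb t /andP [t0 t1].
have := @fB_jensen bool (fun k => if k then t else 1 - t) (fun k => if k then a else b) y.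
rewrite !big_bool /=; apply => //.
- by case => //; rewrite subr_ge0.
- by rewrite addrC subrK.
- by case.
Qed.

Definition nrm2 (x : 'rV[R]_n) := \sum_i x ord0 i ^+ 2.

Lemma nrm2_jensen (I : finType) (w : I -> R) (p : I -> 'rV[R]_n) :
  (forall k, 0 <= w k) -> \sum_k w k = 1 ->
  nrm2 (\sum_k w k *: p k) <= \sum_k w k * nrm2 (p k).
Proof.
move=> w0 w1; rewrite /nrm2.
under [X in _ <= X]eq_bigr do rewrite mulr_sumr.
rewrite [X in _ <= X]exchange_big /=; apply: ler_sum => i _.
rewrite summxE.
under [X in X ^+ 2 <= _]eq_bigr do rewrite mxE.
exact: (@jensen_sq I w (fun k => p k ord0 i) w0 w1).
Qed.

Lemma nrm2_conv (a b : 'rV[R]_n) t : nrm2 (t *: a + (1 - t) *: b) =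
  t * nrm2 a + (1 - t) * nrm2 b - t * (1 - t) * nrm2 (a - b).
Proof.
rewrite /nrm2 !mulr_sumr -big_split -sumrB /=; apply: eq_bigr => i _.
rewrite !mxE; ring.
Qed.

Lemma nrm2_eq0 (a b : 'rV[R]_n) : nrm2 (a - b) = 0 -> a = b.
Proof.
move=> h; apply/rowP => i.
have := @psumr_eq0P _ _ xpredT (fun i => (a - b) ord0 i ^+ 2) (fun i _ => sqr_ge0 _) h i isT.
by move=> /= /eqP; rewrite !mxE sqrf_eq0 subr_eq0 => /eqP.
Qed.

End S.

Arguments fB_jensen {R n I w p y}.
Arguments nrm2 {R n}.
Arguments fB_concave {R n y}.
Arguments nrm2_conv {R n}.
Arguments nrm2_eq0 {R n a b}.
Arguments fBC {R n}.
Arguments simplex_sum_le1 {R n x}.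
Arguments nrm2_jensen {R n I w p}.

Section Hull.
Variables (R : realType) (n : nat) (S : seq 'rV[R]_n).
Hypothesis hS : conv_hull S `<=` @simplex R n.
Local Notation s k := (nth 0 S (nat_of_ord k)).

Lemma in_hull (k : 'I_(size S)) : conv_hull S (s k).
Proof.
exists (fun l => (l == k)%:R); split; first by move=> l; rewrite ler0n.
split.
  by rewrite (bigD1 k) //= eqxx big1 ?addr0 // => l /negbTE ->.
rewrite (bigD1 k) //= eqxx scale1r big1 ?addr0 // => l /negbTE ->.
by rewrite scale0r.
Qed.

Lemma s_simplex (k : 'I_(size S)) : simplex (s k).
Proof. exact/hS/in_hull. Qed.

Lemma LB y m : simplex y -> (forall k : 'I_(size S), m <= fB (s k) y) ->
  forall x, conv_hull S x -> m <= fB x y.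
Proof.
move=> ys hm x [w [w0 [w1 ->]]].
apply: le_trans (fB_jensen w0 w1 s_simplex ys).
rewrite -[m]mul1r -w1 mulr_suml; apply: ler_sum => k _.
by apply: ler_wpM2l.
Qed.

Lemma LBeq y m (w : 'I_(size S) -> R) : simplex y ->
  (forall k : 'I_(size S), m <= fB (s k) y) ->
  (forall k, 0 <= w k) -> \sum_k w k = 1 ->
  fB (\sum_k w k *: s k) y = m ->
  forall k, 0 < w k -> fB (s k) y = m.
Proof.
move=> ys hm w0 w1 hx k wk.
have J := fB_jensen w0 w1 s_simplex ys; rewrite hx in J.
have H0 : \sum_k w k * (fB (s k) y - m) = 0.
  apply/eqP; rewrite eq_le; apply/andP; split; last first.
    by apply: sumr_ge0 => l _; rewrite mulr_ge0 // subr_ge0.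
  under eq_bigr do rewrite mulrBr.
  by rewrite sumrB -mulr_suml w1 mul1r subr_le0.
have := @psumr_eq0P _ _ xpredT (fun k => w k * (fB (s k) y - m))
   (fun l _ => mulr_ge0 (w0 l) (eq_ind _ _ (hm l) _ (esym (subr_ge0 _ _)))) H0 k isT.
move=> /eqP; rewrite mulf_eq0 (gt_eqF wk) /= subr_eq0 => /eqP //.
Qed.

Lemma nrm_bound y m (N : R) : simplex y -> (forall k : 'I_(size S), m <= fB (s k) y) ->
  (forall k : 'I_(size S), fB (s k) y = m -> nrm2 (s k) <= N) ->
  forall a, conv_hull S a -> fB a y = m -> nrm2 a <= N.
Proof.
move=> ys hm hN a [w [w0 [w1 ha]]] fa.
rewrite ha; apply: le_trans (nrm2_jensen w0 w1) _.
rewrite -[N]mul1r -w1 mulr_suml; apply: ler_sum => k _.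
case: (ltrgtP 0 (w k)) => [wk||<-]; last by rewrite !mul0r.
- apply: ler_wpM2l => //; apply: hN.
  have fx : fB (\sum_k w k *: s k) y = m by rewrite -ha.
  exact: (LBeq _ _ _ ys hm w0 w1 fx k wk).
- by move=> /lt_le_trans /(_ (w0 k)); rewrite ltxx.
Qed.

Lemma extreme y m (k0 : 'I_(size S)) : simplex y ->
  (forall k : 'I_(size S), m <= fB (s k) y) -> fB (s k0) y = m ->
  exists v, is_vertex (conv_hull S) v /\ fB v y = m.
Proof.
move=> ys hm hk0.
have P0 : (fun k : 'I_(size S) => fB (s k) y == m) k0 by apply/eqP.
case: (@arg_maxP _ _ _ k0 (fun k : 'I_(size S) => fB (s k) y == m) (fun k : 'I_(size S) => nrm2 (s k)) P0) => k1 /eqP hk1 hmax.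
exists (s k1); split => //; split; first exact: in_hull.
move=> a b ha hb t /andP [t0 t1] hv.
have fa := LB _ _ ys hm _ ha; have fb := LB _ _ ys hm _ hb.
have hc := fB_concave ys _ _ (hS _ ha) (hS _ hb).
have : t * fB a y + (1 - t) * fB b y <= m.
  by rewrite -hk1 hv; apply: hc; rewrite !ltW.
move=> hle.
have fa' : fB a y = m by apply/eqP; rewrite eq_le fa andbT; nra.
have fb' : fB b y = m by apply/eqP; rewrite eq_le fb andbT; nra.
have hN : forall k : 'I_(size S), fB (s k) y = m -> nrm2 (s k) <= nrm2 (s k1).
  by move=> k /eqP hk; apply: hmax.
have na := nrm_bound _ _ _ ys hm hN _ ha fa'.
have nb := nrm_bound _ _ _ ys hm hN _ hb fb'.
have D0 : 0 <= nrm2 (a - b) by apply: sumr_ge0 => i _; apply: sqr_ge0.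
have E := nrm2_conv a b t; rewrite -hv in E.
have tt : 0 < t * (1 - t) by apply: mulr_gt0; lra.
have tD : t * (1 - t) * nrm2 (a - b) <= 0 by nra.
have D : nrm2 (a - b) = 0 by apply/eqP; rewrite eq_le D0 andbT -(pmulr_rle0 _ tt).
have ab := nrm2_eq0 D; subst b.
have -> : s k1 = a by rewrite hv -scalerDl addrC subrK scale1r.
by [].
Qed.

End Hull.

Arguments LB {R n S} hS {y m}.
Arguments extreme {R n S} hS {y m}.
Arguments s_simplex {R n S} hS.
Arguments in_hull {R n S}.

Lemma acos_le (R : realType) (a b : R) : -1 <= a -> b <= 1 -> a <= b -> acos b <= acos a.
Proof.
move=> a1 b1 ab.
have ha : -1 <= a <= 1 by apply/andP; split => //; apply: le_trans ab b1.
have hb : -1 <= b <= 1 by apply/andP; split => //; apply: le_trans a1 ab.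
rewrite leNgt; apply/negP => h.
have Ia : acos a \in `[0, pi]%R by rewrite in_itv /= acos_ge0 // acos_lepi.
have Ib : acos b \in `[0, pi]%R by rewrite in_itv /= acos_ge0 // acos_lepi.
have := ltr_cos Ia Ib.
rewrite h acosK ?in_itv //= acosK ?in_itv //= => /esym.
by rewrite ltNge ab.
Qed.

Lemma amgm {R : realType} {p q : R} : 0 <= p -> 0 <= q ->
  Num.sqrt p * Num.sqrt q <= (p + q) / 2.
Proof.
move=> hp hq.
have g : forall u v : R, u * v <= (u ^+ 2 + v ^+ 2) / 2.
  move=> u v; have := sqr_ge0 (u - v); lra.
by have := g (Num.sqrt p) (Num.sqrt q); rewrite !sqr_sqrtr.
Qed.

Lemma fB_bounds (R : realType) n (x y : 'rV[R]_n) : simplex x -> simplex y ->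
  0 <= fB x y <= 1.
Proof.
move=> hx hy; have x0 := simplex_sum_le1 hx; have y0 := simplex_sum_le1 hy.
case: hx => hx _; case: hy => hy _.
rewrite fBE; apply/andP; split.
  by rewrite addr_ge0 ?mulr_ge0 ?sqrtr_ge0 ?sumr_ge0 // => i _; rewrite mulr_ge0 ?sqrtr_ge0.
have h1 := amgm x0 y0.
have h2 : \sum_i Num.sqrt (x ord0 i) * Num.sqrt (y ord0 i) <= \sum_i (x ord0 i + y ord0 i) / 2.
  by apply: ler_sum => i _; apply: amgm.
have h3 : \sum_i (x ord0 i + y ord0 i) / 2 = (\sum_i x ord0 i + \sum_i y ord0 i) / 2.
  by rewrite -mulr_suml big_split.
lra.
Qed.

Arguments fB_bounds {R n x y}.

Theorem mainTheorem15 (R : realType) (n : nat) :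
  (forall y : 'rV[R]_n, simplex y ->
     concave_on (@simplex R n) (fun x => fB x y)) /\
  (forall x : 'rV[R]_n, simplex x ->
     concave_on (@simplex R n) (fun y => fB x y)) /\
  (forall S : seq 'rV[R]_n, S != [::] ->
     conv_hull S `<=` @simplex R n ->
     exists u v : 'rV[R]_n,
       is_vertex (conv_hull S) u /\ is_vertex (conv_hull S) v /\
       (forall u' v', is_vertex (conv_hull S) u' -> is_vertex (conv_hull S) v' ->
          baran_dist u' v' <= baran_dist u v) /\
       diam (@baran_dist R n) (conv_hull S) = baran_dist u v).
Proof.
split; first by move=> y ys; apply: fB_concave.
split.
  move=> x xs a b ha hb t ht; rewrite !(fBC x); exact: fB_concave.
move=> S S0 hS.
have sz : (0 < size S)%N by case: S S0 hS.
pose k0 : 'I_(size S) := Ordinal sz.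
case: (@arg_minP _ _ _ (k0, k0) xpredT
   (fun p : 'I_(size S) * 'I_(size S) => fB (nth 0 S p.1) (nth 0 S p.2)) isT)
   => [[i j]] _ /= hmin.
set m := fB (nth 0 S i) (nth 0 S j) in hmin.
have hglob : forall x y, conv_hull S x -> conv_hull S y -> m <= fB x y.
  move=> x y hx hy; apply: (LB hS (hS _ hy) _ x hx) => k.
  rewrite fBC; apply: (LB hS (s_simplex hS k) _ y hy) => l.
  by rewrite fBC; exact: (hmin (k, l) isT).
have [u [uv fu]] : exists u, is_vertex (conv_hull S) u /\ fB u (nth 0 S j) = m.
  by apply: (extreme hS i (s_simplex hS j)) => // k; exact: (hmin (k, j) isT).
have [v [vv fv]] : exists v, is_vertex (conv_hull S) v /\ fB v u = m.
  apply: (extreme hS j (hS _ uv.1)); last by rewrite fBC.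
  by move=> l; rewrite fBC; apply: hglob; [exact: uv.1 | exact: in_hull].
have fuv : fB u v = m by rewrite fBC.
have dle : forall x y, conv_hull S x -> conv_hull S y -> baran_dist x y <= baran_dist u v.
  move=> x y hx hy; rewrite /baran_dist ler_pM2l //.
  have /andP [b1 b2] := fB_bounds (hS _ uv.1) (hS _ vv.1).
  have /andP [b3 b4] := fB_bounds (hS _ hx) (hS _ hy).
  apply: acos_le; [lra | lra |].
  by rewrite fuv; apply: hglob.
exists u, v; split => //; split => //; split.
  by move=> u' v' hu hv; apply: dle; [exact: hu.1 | exact: hv.1].
rewrite /diam; apply/le_anti/andP; split.
  apply: ge_sup.
    by exists (baran_dist u v); exists u; [exact: uv.1|]; exists v; [exact: vv.1|].
  by move=> z [x hx [y hy <-]]; apply: dle.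
apply: sup_upper_bound.
  split.
    by exists (baran_dist u v); exists u; [exact: uv.1|]; exists v; [exact: vv.1|].
  by exists (baran_dist u v) => z [x hx [y hy <-]]; apply: dle.
by exists u; [exact: uv.1|]; exists v; [exact: vv.1|].
Qed.
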